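(* Let $q=(V_q,E_q,L_q)$ be a query hypergraph, $H=(V_H,E_H,L_H)$ a data hypergraph, and $M:E_q\to E_H$ any map. Then $M$ is an embedding of $q$ in $H$ if and only if $Sig\big(\bigcap_{e\in S}e\big)=Sig\big(\bigcap_{e\in S}M(e)\big)$ for every non-empty subset $S\subseteq E_q$.
   Context: A (vertex-labeled) hypergraph is a triple $H=(V,E,L)$ where $V$ is a finite set, $E$ is a set of non-empty subsets of $V$ (hyperedges, no repeated hyperedges) with $\bigcup_{e\in E}e=V$, and $L:V\to\Sigma$ assigns each vertex a label. For $S\subseteq V$, $Sig(S)$ is the multiset of labels $\{L(v)\mid v\in S\}$ (with multiplicity). A map $M:E_q\to E_H$ is an embedding of $q$ in $H$ if there exists an injective map $\phi:V_q\to V_H$ with $L_H(\phi(u))=L_q(u)$ for all $u\in V_q$ and $\{\phi(u):u\in e\}=M(e)$ for every $e\in E_q$. *)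

(* Defs.v *)
From mathcomp Require Import all_boot.
Set Implicit Arguments. Unset Strict Implicit. Unset Printing Implicit Defensive.

(* A vertex-labeled hypergraph: the vertex set is the whole finite type V,
   hyperedges form a set E of non-empty subsets of V covering V
   (no repeated hyperedges since E is a set), L labels vertices. *)
Record hypergraph (Sigma : eqType) := Hypergraph {
  hvert : finType;
  hedges : {set {set hvert}};
  hlab : hvert -> Sigma;
  hedges_nonempty : forall e, e \in hedges -> e != set0;
  hedges_cover : \bigcup_(e in hedges) e = [set: hvert]
}.

Arguments hvert {Sigma} h.
Arguments hedges {Sigma} h.
Arguments hlab {Sigma} h _.

(* Sig(S) as a multiset of labels, represented by its multiplicity function. *)
Definition Sig (Sigma : eqType) (V : finType) (L : V -> Sigma) (S : {set V})
  : Sigma -> nat := fun a => #|[set v in S | L v == a]|.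

Definition is_embedding (Sigma : eqType) (q H : hypergraph Sigma)
  (M : {set hvert q} -> {set hvert H}) : Prop :=
  exists phi : hvert q -> hvert H,
    [/\ injective phi,
        (forall u, hlab H (phi u) = hlab q u) &
        (forall e, e \in hedges q -> phi @: e = M e)].

(* Main.v *)
Require Import Defs.
From mathcomp Require Import all_boot.
Set Implicit Arguments. Unset Strict Implicit. Unset Printing Implicit Defensive.

Lemma disjU1 (T : finType) (x : T) (X A : {set T}) :
  [disjoint x |: X & A] = (x \notin A) && [disjoint X & A].
Proof. by rewrite !disjoints_subset subUset sub1set inE. Qed.

Definition cnt (Sigma : eqType) (E V : finType) (typ : V -> {set E})
  (lab : V -> Sigma) (a : Sigma) (T X : {set E}) :=
  #|[set v | [&& T \subset typ v, [disjoint X & typ v] & lab v == a]]|.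

Lemma cnt_step (Sigma : eqType) (E V : finType) (typ : V -> {set E})
  (lab : V -> Sigma) (a : Sigma) (T X : {set E}) x :
  x \in X ->
  cnt typ lab a (x |: T) (X :\ x) + cnt typ lab a T X = cnt typ lab a T (X :\ x).
Proof.
move=> xX; rewrite /cnt -[RHS](cardsID [set v | x \in typ v]).
have dX (A : {set E}) : [disjoint X & A] = (x \notin A) && [disjoint X :\ x & A].
  by rewrite -[in LHS](setD1K xX) disjU1.
congr (_ + _); apply: eq_card => v; rewrite !inE ?subUset ?sub1set ?dX;
by case: (x \in typ v); rewrite ?andbT ?andbF //=.
Qed.

Lemma cnt_eq (Sigma : eqType) (E V1 V2 : finType) (typ1 : V1 -> {set E})
  (lab1 : V1 -> Sigma) (typ2 : V2 -> {set E}) (lab2 : V2 -> Sigma) (a : Sigma)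
  (D : {set E}) :
  (forall T : {set E}, T \subset D -> T != set0 ->
     cnt typ1 lab1 a T set0 = cnt typ2 lab2 a T set0) ->
  forall n (X T : {set E}), #|X| <= n -> X \subset D -> T \subset D -> T != set0 ->
     cnt typ1 lab1 a T X = cnt typ2 lab2 a T X.
Proof.
move=> h0; elim=> [|n IH] X T hX XD TD T0.
  by move: hX; rewrite leqn0 cards_eq0 => /eqP ->; apply: h0.
have [->|/set0Pn [x xX]] := eqVneq X set0; first by apply: h0.
have hX' : #|X :\ x| <= n.
  by move: hX; rewrite (cardsD1 x X) xX add1n ltnS.
have X'D : X :\ x \subset D by apply: subset_trans XD; apply: subsetDl.
have xD : x \in D by apply: (subsetP XD).
have xTD : x |: T \subset D by rewrite subUset sub1set xD.
have xT0 : x |: T != set0 by apply/set0Pn; exists x; rewrite setU11.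
have e1 := cnt_step typ1 lab1 a T xX.
have e2 := cnt_step typ2 lab2 a T xX.
rewrite (IH _ _ hX' X'D xTD xT0) (IH _ _ hX' X'D TD T0) in e1.
by apply: (@addnI (cnt typ2 lab2 a (x |: T) (X :\ x))); rewrite e1 e2.
Qed.

Lemma inj_exists (K : eqType) (A B : finType) (kA : A -> K) (kB : B -> K) :
  (forall x, #|[set y | kA y == kA x]| <= #|[set y | kB y == kA x]|) ->
  exists f : A -> B, injective f /\ forall x, kB (f x) = kA x.
Proof.
move=> h.
case: (pickP (@predT B)) => [b0 _ | hB]; last first.
  have contra : A -> False.
    move=> x; have := h x.
    have : 0 < #|[set y | kA y == kA x]| by apply/card_gt0P; exists x; rewrite inE.
    move=> /leq_trans H1 /H1 /card_gt0P [y _].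
    by have := hB y.
  by exists (fun x => match contra x with end); split => [x|x]; case: (contra x).
pose sA k := enum [pred y | kA y == k].
pose sB k := enum [pred y | kB y == k].
have szA k : size (sA k) = #|[set y | kA y == k]| by rewrite -cardE cardsE.
have szB k : size (sB k) = #|[set y | kB y == k]| by rewrite -cardE cardsE.
have inA x : x \in sA (kA x) by rewrite mem_enum inE.
have ltA x : index x (sA (kA x)) < size (sB (kA x)).
  by rewrite szB; apply: (leq_trans _ (h x)); rewrite -szA index_mem.
pose f x := nth b0 (sB (kA x)) (index x (sA (kA x))).
have kf x : kB (f x) = kA x.
  by have := mem_nth b0 (ltA x); rewrite mem_enum inE => /eqP.
exists f; split=> // x y fxy.
have kxy : kA x = kA y by rewrite -kf fxy kf.
move: fxy; rewrite /f -kxy => /eqP; rewrite nth_uniq ?enum_uniq ?ltA //; last first.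
  by rewrite kxy ltA.
move/eqP => ixy.
by rewrite -(nth_index x (inA x)) ixy kxy nth_index // -kxy inA.
Qed.

Lemma eq_decomp (E : finType) (D T A : {set E}) :
  A \subset D -> (A == T) = (T \subset A) && [disjoint D :\: T & A].
Proof.
move=> AD; rewrite eqEsubset andbC; congr andb.
apply/idP/idP => [AT|].
  rewrite disjoints_subset; apply/subsetP => y; rewrite !inE => /andP[yT _].
  by apply/negP => /(subsetP AT); rewrite (negbTE yT).
rewrite disjoints_subset => h; apply/subsetP => y yA.
have := subsetP h y; rewrite !inE (subsetP AD y yA) andbT.
by case: (y \in T) => //= /(_ isT); rewrite yA.
Qed.

Theorem theorem1 (Sigma : eqType) (q H : hypergraph Sigma)
  (M : {set hvert q} -> {set hvert H})
  (hM : forall e, e \in hedges q -> M e \in hedges H) :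
  is_embedding M <->
  (forall S : {set {set hvert q}}, S \subset hedges q -> S != set0 ->
     forall a : Sigma,
       Sig (hlab q) (\bigcap_(e in S) e) a
       = Sig (hlab H) (\bigcap_(e in S) M e) a).
Proof.
split.
  case=> phi [phiI phiL phiM] S SE S0 a.
  have -> : \bigcap_(e in S) M e = phi @: \bigcap_(e in S) e.
    apply/setP => v; apply/bigcapP/idP.
      move=> hv; case/set0Pn: S0 => e0 e0S.
      have := hv e0 e0S; rewrite -(phiM e0 (subsetP SE e0 e0S)).
      case/imsetP => u _ vE; subst v; apply: imset_f; apply/bigcapP => e eS.
      have := hv e eS; rewrite -(phiM e (subsetP SE e eS)).
      by rewrite mem_imset.
    case/imsetP => u /bigcapP hu -> e eS.
    by rewrite -(phiM e (subsetP SE e eS)); apply: imset_f; apply: hu.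
  rewrite /Sig.
  have -> : [set v in phi @: \bigcap_(e in S) e | hlab H v == a]
          = phi @: [set u in \bigcap_(e in S) e | hlab q u == a].
    apply/setP => v; apply/idP/idP.
      rewrite inE => /andP[/imsetP[u uS ->]]; rewrite phiL => la.
      by apply: imset_f; rewrite inE uS la.
    case/imsetP => u; rewrite inE => /andP[uS la] ->.
    by rewrite inE imset_f // phiL.
  by rewrite card_imset.
move=> hS.
pose typq (u : hvert q) := [set e in hedges q | u \in e].
pose typH (v : hvert H) := [set e in hedges q | v \in M e].
have base (a : Sigma) (T : {set {set hvert q}}) : T \subset hedges q -> T != set0 ->
    cnt typq (hlab q) a T set0 = cnt typH (hlab H) a T set0.
  move=> TE T0; have := hS T TE T0 a; rewrite /Sig /cnt => heq.
  have d0 (B : {set {set hvert q}}) : [disjoint set0 & B].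
    by rewrite disjoints_subset sub0set.
  have -> : [set v | [&& T \subset typq v, [disjoint set0 & typq v]
               & hlab q v == a]] = [set v in \bigcap_(e in T) e | hlab q v == a].
    apply/setP => v; rewrite !inE d0 /=; congr andb.
    apply/subsetP/bigcapP => hv e eT.
      by have := hv e eT; rewrite inE => /andP[].
    by rewrite inE (subsetP TE e eT) hv.
  have -> : [set v | [&& T \subset typH v, [disjoint set0 & typH v]
               & hlab H v == a]] = [set v in \bigcap_(e in T) M e | hlab H v == a].
    apply/setP => v; rewrite !inE d0 /=; congr andb.
    apply/subsetP/bigcapP => hv e eT.
      by have := hv e eT; rewrite inE => /andP[].
    by rewrite inE (subsetP TE e eT) hv.
  exact: heq.
pose kq u := (typq u, hlab q u).
pose kH v := (typH v, hlab H v).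
have fib (T : {set {set hvert q}}) (a : Sigma) : T \subset hedges q -> T != set0 ->
    #|[set u | kq u == (T, a)]| = #|[set v | kH v == (T, a)]|.
  move=> TE T0.
  have := cnt_eq (base a) (leqnn _) (subsetDl (hedges q) T) TE T0.
  rewrite /cnt => e.
  have -> : [set u | kq u == (T, a)] = [set v | [&& T \subset typq v,
       [disjoint hedges q :\: T & typq v] & hlab q v == a]].
    apply/setP => u; rewrite !inE xpair_eqE (@eq_decomp _ (hedges q) T) ?andbA //.
    by apply/subsetP => e'; rewrite inE => /andP[].
  have -> : [set u | kH u == (T, a)] = [set v | [&& T \subset typH v,
       [disjoint hedges q :\: T & typH v] & hlab H v == a]].
    apply/setP => u; rewrite !inE xpair_eqE (@eq_decomp _ (hedges q) T) ?andbA //.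
    by apply/subsetP => e'; rewrite inE => /andP[].
  exact: e.
have typqE u : typq u \subset hedges q.
  by apply/subsetP => e'; rewrite inE => /andP[].
have typq0 u : typq u != set0.
  have : u \in \bigcup_(e in hedges q) e by rewrite hedges_cover inE.
  case/bigcupP => e eE ue; apply/set0Pn; exists e; by rewrite inE eE ue.
have [phi [phiI phik]] : exists f : hvert q -> hvert H,
    injective f /\ forall x, kH (f x) = kq x.
  apply: inj_exists => x; rewrite [kq x]surjective_pairing.
  by rewrite fib // ?typqE ?typq0.
exists phi; split => // [u|e eE].
  by have := phik u => /(congr1 snd).
have phiT u : typH (phi u) = typq u by have := phik u => /(congr1 fst).
apply/eqP; rewrite eqEsubset; apply/andP; split.
  apply/subsetP => v /imsetP [u ue ->].
  have : e \in typH (phi u) by rewrite phiT inE eE ue.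
  by rewrite inE => /andP[].
apply/subsetP => v ve.
have Tn : typH v != set0 by apply/set0Pn; exists e; rewrite inE eE ve.
have TE : typH v \subset hedges q by apply/subsetP => e'; rewrite inE => /andP[].
have : phi @: [set u | kq u == kH v] == [set w | kH w == kH v].
  rewrite eqEcard card_imset // [kH v]surjective_pairing -fib // leqnn andbT.
  by apply/subsetP => w /imsetP [u]; rewrite !inE => /eqP <- ->; rewrite phik.
move/eqP/setP/(_ v); rewrite !inE eqxx => /imsetP [u]; rewrite inE => /eqP ku ->.
apply: imset_f.
have : e \in typq u by rewrite -[typq u]/(kq u).1 ku inE eE ve.
by rewrite inE => /andP[].
Qed.
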